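(* Let $V$ be a real vector space of finite even dimension with nondegenerate quadratic form $Q$, and let $\sigma$ be a real structure on $\mathbb{C}l(V)$. The following are equivalent: (1) $\sigma$ is admissible; (2) $V_\sigma$ is stable under $c$; (3) $V$ is stable under $\sigma$; (4) $\sigma$ restricts to a $Q$-orthogonal symmetry of $V$ (an involutive $Q$-orthogonal transformation of $V$); (5) the subspaces $V_+:=V\cap V_\sigma$ and $V_-:=V\cap iV_\sigma$ form a $Q$-orthogonal decomposition $V=V_+\oplus V_-$.
   Context: $Cl(V,Q)$ is the real Clifford algebra with $v^2=+Q(v)$, $\mathbb{C}l(V)=Cl(V,Q)\otimes\mathbb{C}$ with complex conjugation $c(a\otimes\lambda)=a\otimes\bar\lambda$, and $V^{\mathbb{C}}=V\otimes\mathbb{C}\subset\mathbb{C}l(V)$. A real structure is an involutive antilinear algebra automorphism of $\mathbb{C}l(V)$ stabilizing $V^{\mathbb{C}}$; it is admissible if it commutes with $c$. $V_\sigma=\{v\in V^{\mathbb{C}}:\sigma(v)=v\}$. *)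

(* Defs.v *)
From mathcomp Require Import all_boot all_algebra.
From mathcomp Require Import reals.
From mathcomp.real_closed Require Import complex.
Import GRing.Theory Num.Theory.

Set Implicit Arguments.
Unset Strict Implicit.
Unset Printing Implicit Defensive.

Local Open Scope ring_scope.

Section CliffordDefs.
Variable R : realType.
Local Notation C := R[i].
Local Notation rC x := ((x : R)%:C)%C.

Variable V : vectType R.

Definition polarQ (Q : V -> R) (v w : V) : R := (Q (v + w) - Q v - Q w) / 2%:R.

Definition is_quadratic_form (Q : V -> R) : Prop :=
  (forall (a : R) (v : V), Q (a *: v) = a ^+ 2 * Q v) /\
  (forall (a : R) (u v w : V), polarQ Q (a *: u + v) w = a * polarQ Q u w + polarQ Q v w).

Definition nondegenerate_qf (Q : V -> R) : Prop :=
  forall v : V, (forall w : V, polarQ Q v w = 0) -> v = 0.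

Definition clifford_map (Q : V -> R) (B : algType C) (f : V -> B) : Prop :=
  (forall (a : R) (u v : V), f (a *: u + v) = rC a *: f u + f v) /\
  (forall v : V, f v * f v = (rC (Q v)) %:A).

Definition calg_morph (A B : algType C) (g : A -> B) : Prop :=
  (forall (z : C) (x y : A), g (z *: x + y) = z *: g x + g y) /\
  (forall x y : A, g (x * y) = g x * g y) /\ g 1 = 1.

Definition antilinear_morph (A : algType C) (s : A -> A) : Prop :=
  (forall (z : C) (x y : A), s (z *: x + y) = z^* *: s x + s y) /\
  (forall x y : A, s (x * y) = s x * s y) /\ s 1 = 1.

(* (A, j, c) is the complexified Clifford algebra  Cl(V,Q) (x)_R C,  with j the
   inclusion V -> Cl(V,Q) -> Cl(V,Q) (x) C, and c the complex conjugation
   c(a (x) lambda) = a (x) conj(lambda).  Cl(V,Q) (x) C is characterised (up to unique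
   isomorphism) by the universal property: C-algebra maps out of it correspond to
   real-linear maps f from V with f(v)^2 = Q(v).  The conjugation c is the (unique)
   antilinear involutive algebra automorphism fixing V, i.e. fixing Cl(V,Q). *)
Definition complexified_clifford (Q : V -> R) (A : algType C) (j : V -> A) (c : A -> A)
  : Prop :=
  clifford_map Q j /\
  (forall (B : algType C) (f : V -> B), clifford_map Q f ->
     exists g : A -> B, calg_morph g /\ (forall v, g (j v) = f v) /\
       (forall g' : A -> B, calg_morph g' -> (forall v, g' (j v) = f v) ->
          forall x, g' x = g x)) /\
  antilinear_morph c /\ (forall x, c (c x) = x) /\ (forall v, c (j v) = j v).

(* V^C = V (x) C inside Cl(V) (x) C : the complex span of j(V) *)
Definition VC (A : algType C) (j : V -> A) (x : A) : Prop :=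
  exists v w : V, x = j v + 'i%C *: j w.

Definition real_structure (A : algType C) (j : V -> A) (s : A -> A) : Prop :=
  antilinear_morph s /\ (forall x, s (s x) = x) /\ (forall x, VC j x -> VC j (s x)).

Definition admissible (A : algType C) (c s : A -> A) : Prop :=
  forall x, s (c x) = c (s x).

Definition Vsigma (A : algType C) (j : V -> A) (s : A -> A) (x : A) : Prop :=
  VC j x /\ s x = x.

Definition Vplus (A : algType C) (j : V -> A) (s : A -> A) (v : V) : Prop :=
  Vsigma j s (j v).
Definition Vminus (A : algType C) (j : V -> A) (s : A -> A) (v : V) : Prop :=
  exists y : A, Vsigma j s y /\ j v = 'i%C *: y.

End CliffordDefs.

(* Main.v *)
Require Import Defs.
From mathcomp Require Import all_boot all_algebra.
From mathcomp Require Import reals.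
From mathcomp.real_closed Require Import complex.
From mathcomp Require Import lra.
Import GRing.Theory Num.Theory.
Set Implicit Arguments.
Unset Strict Implicit.
Local Open Scope ring_scope.

Section Aux.
Variable R : realType.
Local Notation C := R[i].

Lemma ii_m1 : ('i%C : C) * 'i%C = -1.
Proof. apply/eqP; rewrite eq_complex /= mul0r mulr1 sub0r mul0r mulr0 addr0 oppr0 !eqxx. by []. Qed.
Lemma conj_i : ('i%C : C)^* = - 'i%C.
Proof. change (('i%C : C)^*%C = - 'i%C). rewrite /conjc /=; apply/eqP; rewrite eq_complex /= ?oppr0 !eqxx //. Qed.
Lemma conj_mi : (- 'i%C : C)^* = 'i%C.
Proof. change ((- 'i%C : C)^*%C = 'i%C). rewrite /conjc /=; apply/eqP; rewrite eq_complex /= ?opprK ?oppr0 !eqxx //. Qed.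
Lemma conj_r (x : R) : ((x%:C)%C : C)^* = (x%:C)%C.
Proof. exact: conjc_real. Qed.
Lemma rC_inj (x y : R) : (x%:C)%C = (y%:C)%C :> C -> x = y.
Proof. by case. Qed.
Lemma i_neq0 : ('i%C : C) != 0.
Proof. by rewrite eq_complex /= oner_eq0 andbF. Qed.
Lemma mi_neq0 : (- 'i%C : C) != 0.
Proof. by rewrite oppr_eq0 i_neq0. Qed.
Lemma two_neq0 : (2%:R : C) != 0.
Proof. by rewrite pnatr_eq0. Qed.

Variable A : algType C.

Lemma selfopp (x : A) : x = - x -> x = 0.
Proof.
move=> h; have: (2%:R : C) *: x = 0 by rewrite scaler_nat mulr2n {1}h addNr.
by move/eqP; rewrite scaler_eq0 (negbTE two_neq0) => /eqP.
Qed.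

Lemma scalA_inj (k l : C) : k%:A = l%:A :> A -> k = l.
Proof.
move=> h; apply/eqP; rewrite -subr_eq0; apply/eqP.
have: (k - l) *: (1 : A) = 0 by rewrite scalerBl h subrr.
by move/eqP; rewrite scaler_eq0 oner_eq0 orbF => /eqP.
Qed.

Section AL.
Variable s : A -> A.
Hypothesis hs : antilinear_morph s.
Lemma alD x y : s (x + y) = s x + s y.
Proof. by have := hs.1 1 x y; rewrite scale1r conjC1 scale1r. Qed.
Lemma al0 : s 0 = 0.
Proof. by have := alD 0 0; rewrite addr0 => /eqP; rewrite -{1}(addr0 (_ 0)) (inj_eq (addrI _)) eq_sym => /eqP. Qed.
Lemma alZ z x : s (z *: x) = z^* *: s x.
Proof. by have := hs.1 z x 0; rewrite !addr0 al0 addr0. Qed.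
Lemma alN x : s (- x) = - s x.
Proof. by rewrite -scaleN1r alZ conjCN1 scaleN1r. Qed.
Lemma alB x y : s (x - y) = s x - s y.
Proof. by rewrite alD alN. Qed.
Lemma alM x y : s (x * y) = s x * s y.
Proof. exact: hs.2.1. Qed.
Lemma al1 : s 1 = 1.
Proof. exact: hs.2.2. Qed.
End AL.

Lemma comp_calg (s1 s2 : A -> A) : antilinear_morph s1 -> antilinear_morph s2 ->
  calg_morph (fun x => s1 (s2 x)).
Proof.
move=> h1 h2; split; [|split].
- by move=> z x y; rewrite h2.1 h1.1 conjCK.
- by move=> x y; rewrite (alM h2) (alM h1).
- by rewrite (al1 h2) (al1 h1).
Qed.

End Aux.

Section Main.
Variables (R : realType) (V : vectType R) (Q : V -> R)
  (A : algType R[i]) (j : V -> A) (c : A -> A) (sigma : A -> A).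
Local Notation C := R[i].
Hypothesis Hqf : is_quadratic_form Q.
Hypothesis Hnd : nondegenerate_qf Q.
Hypothesis Hcl : complexified_clifford Q j c.
Hypothesis Hrs : real_structure j sigma.

Let Hj : clifford_map Q j := Hcl.1.
Let Hca : antilinear_morph c := Hcl.2.2.1.
Let Hcc : forall x, c (c x) = x := Hcl.2.2.2.1.
Let Hcj : forall v, c (j v) = j v := Hcl.2.2.2.2.
Let Hsa : antilinear_morph sigma := Hrs.1.
Let Hss : forall x, sigma (sigma x) = x := Hrs.2.1.
Let HsVC : forall x, VC j x -> VC j (sigma x) := Hrs.2.2.

Lemma jD u w : j (u + w) = j u + j w.
Proof. by have := Hj.1 1 u w; rewrite scale1r (_ : (1%:C)%C = 1) // scale1r. Qed.
Lemma j0 : j 0 = 0.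
Proof. by have := jD 0 0; rewrite addr0 => /eqP; rewrite -{1}(addr0 (_ 0)) (inj_eq (addrI _)) eq_sym => /eqP. Qed.
Lemma jZ a u : j (a *: u) = (a%:C)%C *: j u.
Proof. by have := Hj.1 a u 0; rewrite !addr0 j0 addr0. Qed.
Lemma jN u : j (- u) = - j u.
Proof. by rewrite -scaleN1r jZ (_ : ((-1)%:C)%C = -1); [rewrite scaleN1r|apply/eqP; rewrite eq_complex /= oppr0 !eqxx]. Qed.
Lemma jB u w : j (u - w) = j u - j w.
Proof. by rewrite jD jN. Qed.

Lemma j_eq0 v : j v = 0 -> v = 0.
Proof.
move=> hv; apply: Hnd => w.
have E1 := Hj.2 (v + w); have E2 := Hj.2 w; have E3 := Hj.2 v.
rewrite jD hv add0r E2 in E1; rewrite hv mul0r in E3.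
have := scalA_inj E1 => /rC_inj e1.
have e3' : ((Q v)%:C)%C%:A = (0 : C)%:A :> A by rewrite scale0r -E3.
have := scalA_inj e3'; rewrite (_ : (0 : C) = (0%:C)%C) // => /rC_inj e3.
rewrite /polarQ -e1 -e3; lra.
Qed.

Lemma j_inj u w : j u = j w -> u = w.
Proof. by move=> h; apply/eqP; rewrite -subr_eq0; apply/eqP/j_eq0; rewrite jB h subrr. Qed.

Lemma VC_j v : VC j (j v).
Proof. by exists v, 0; rewrite j0 scaler0 addr0. Qed.

Lemma sig_plus v : Vplus j sigma v -> sigma (j v) = j v.
Proof. by case. Qed.
Lemma sig_minus v : Vminus j sigma v -> sigma (j v) = - j v.
Proof.
case=> y [[_ hy] ->]; rewrite (alZ Hsa) hy conj_i scaleNr //.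
Qed.

Definition P1 := admissible c sigma.
Definition P2 := forall x, Vsigma j sigma x -> Vsigma j sigma (c x).
Definition P3 := forall v : V, exists w : V, sigma (j v) = j w.
Definition P4 := exists s : V -> V,
            (forall (a : R) (u v : V), s (a *: u + v) = a *: s u + s v) /\
            (forall v, Q (s v) = Q v) /\ (forall v, s (s v) = v) /\
            (forall v, sigma (j v) = j (s v)).
Definition P5 := (forall v : V, exists a b : V, [/\ Vplus j sigma a, Vminus j sigma b & v = a + b]) /\
        (forall v : V, Vplus j sigma v -> Vminus j sigma v -> v = 0) /\
        (forall a b : V, Vplus j sigma a -> Vminus j sigma b -> polarQ Q a b = 0).

Lemma p1p2 : P1 -> P2.
Proof.
move=> h x [[a [b ->]] hx]; split; last by rewrite h hx.
exists a, (- b); rewrite (alD Hca) (alZ Hca) !Hcj conj_i jN scaleNr scalerN //.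
Qed.


Lemma zm_aux (M : zmodType) (t u d : M) : t - (u + d - t) = - (u - d) -> t - d = - (t - d).
Proof.
move=> h; apply/eqP; rewrite -addr_eq0.
have -> : t - d + (t - d) = t - (u + d - t) + (u - d).
  rewrite !opprB !opprD (addrA t t) -(addrA (t + t)) (addrACA (- u)) addNr add0r.
  by rewrite [LHS]addrACA.
by rewrite h addNr.
Qed.


Lemma p2p3 : P2 -> P3.
Proof.
move=> h v.
have [a [b Ht]] : VC j (sigma (j v)) := HsVC (VC_j v).
have Hx : Vsigma j sigma (j v + sigma (j v)).
  split; first by exists (v + a), b; rewrite Ht jD addrA.
  by rewrite (alD Hsa) Hss addrC.
have Hy : Vsigma j sigma ('i%C *: (j v - sigma (j v))).
  split.
    exists b, (v - a); rewrite Ht jB opprD !scalerDr !scalerN scalerA ii_m1 scaleN1r opprK.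
    by rewrite [LHS]addrA [LHS]addrC.
  by rewrite (alZ Hsa) (alB Hsa) Hss conj_i scaleNr -scalerN opprB.
have [_ E1] := h _ Hx; have [_ E2] := h _ Hy.
rewrite (alD Hca) Hcj (alD Hsa) in E1.
rewrite (alZ Hca) (alB Hca) Hcj conj_i (alZ Hsa) (alB Hsa) conj_mi in E2.
rewrite scaleNr -scalerN in E2; move/(scalerI (i_neq0 R)) in E2.
have E1' : sigma (c (sigma (j v))) = j v + c (sigma (j v)) - sigma (j v).
  by rewrite -E1 [sigma (j v) + _]addrC addrK.
rewrite E1' in E2.
have := selfopp (zm_aux E2) => /eqP; rewrite subr_eq0 => /eqP Etc.
rewrite Ht in Etc. move: Etc; rewrite (alD Hca) (alZ Hca) !Hcj conj_i => /addrI.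
rewrite scaleNr => /selfopp /eqP; rewrite scaler_eq0 (negbTE (i_neq0 R)) /= => /eqP jb0.
by exists a; rewrite Ht jb0 scaler0 addr0.
Qed.


Lemma calg_cl (g : A -> A) : calg_morph g -> clifford_map Q (fun v => g (j v)).
Proof.
case=> gl [gm g1]; split.
  by move=> a u v; rewrite Hj.1 gl.
move=> v; rewrite -gm Hj.2.
have g0 : g 0 = 0.
  by have := gl 1 0 0; rewrite !scale1r addr0 => /eqP; rewrite -{1}(addr0 (g 0)) (inj_eq (addrI _)) eq_sym => /eqP.
by have := gl ((Q v)%:C)%C 1 0; rewrite addr0 g0 addr0 g1.
Qed.

Lemma p3p1 : P3 -> P1.
Proof.
move=> h.
have m1 := comp_calg Hsa Hca; have m2 := comp_calg Hca Hsa.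
have [g [_ [_ gu]]] := Hcl.2.1 A _ (calg_cl m1).
move=> x; rewrite (gu _ m1 (fun v => erefl)) (gu _ m2) //.
by move=> v; rewrite Hcj; have [w ->] := h v; rewrite Hcj.
Qed.

Lemma p3p4 : P3 -> P4.
Proof.
move=> h.
have h' : forall v, exists w, sigma (j v) == j w by move=> v; have [w ->] := h v; exists w.
pose s v := xchoose (h' v).
have hs : forall v, sigma (j v) = j (s v) by move=> v; apply/eqP; exact: (xchooseP (h' v)).
exists s; split; [|split; [|split]] => //.
- move=> a u v; apply: j_inj; rewrite -hs Hj.1 (alD Hsa) (alZ Hsa) conj_r !hs.
  by rewrite jD jZ.
- move=> v; apply: (@rC_inj R); apply: (@scalA_inj R A).
  by rewrite -!Hj.2 -!hs -(alM Hsa) Hj.2 (alZ Hsa) conj_r (al1 Hsa).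
- by move=> v; apply: j_inj; rewrite -!hs Hss.
Qed.

Lemma p4p3 : P4 -> P3.
Proof. by case=> s [_ [_ [_ h]]] v; exists (s v). Qed.

Lemma p5p3 : P5 -> P3.
Proof.
case=> hd _ v; have [a [b [ha hb ->]]] := hd v.
by exists (a - b); rewrite jD (alD Hsa) sig_plus // sig_minus // jB.
Qed.


Lemma p4p5 : P4 -> P5.
Proof.
case=> s [sl [sQ [ss hs]]].
have sD u w : s (u + w) = s u + s w by have := sl 1 u w; rewrite !scale1r.
have sZ a u : s (a *: u) = a *: s u.
  by apply: j_inj; rewrite -hs !jZ (alZ Hsa) conj_r hs.
have sN u : s (- u) = - s u by apply: j_inj; rewrite -hs !jN (alN Hsa) hs.
have sB u w : s (u - w) = s u - s w by rewrite sD sN.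
split; [|split].
- move=> v; exists (2^-1 *: (v + s v)), (2^-1 *: (v - s v)); split.
  + split; first exact: VC_j.
    by rewrite hs sZ sD ss addrC.
  + exists ((-'i%C) *: j (2^-1 *: (v - s v))); split; first split.
    * exists 0, (-(2^-1 *: (v - s v))).
      by rewrite j0 add0r jN scalerN scaleNr.
    * rewrite (alZ Hsa) conj_mi hs sZ sB ss -opprB scalerN jN scalerN scaleNr //.
    * by rewrite scalerA mulrN ii_m1 opprK scale1r.
  + rewrite -scalerDr addrACA subrr addr0 -mulr2n -scaler_nat scalerA mulVf ?scale1r //.
    by rewrite pnatr_eq0.
- move=> v hp hm; have e1 := sig_plus hp; have e2 := sig_minus hm.
  rewrite e1 -jN in e2; have h := j_inj e2.
  have : (2%:R : R) *: v = 0 by rewrite scaler_nat mulr2n {1}h addNr.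
  by move/eqP; rewrite scaler_eq0 pnatr_eq0 /= => /eqP.
- move=> a b ha hb.
  have sa : s a = a by apply: j_inj; rewrite -hs sig_plus.
  have sb : s b = - b by apply: j_inj; rewrite -hs sig_minus // jN.
  have eQ : Q (a + b) = Q (a - b) by rewrite -sQ sD sa sb.
  have Qn : Q (- b) = Q b by rewrite -scaleN1r Hqf.1 sqrrN expr1n mul1r.
  have Q0 : Q 0 = 0 by have := Hqf.1 0 0; rewrite scale0r expr0n mul0r.
  have := Hqf.2 (-1) b 0 a; rewrite scaleN1r addr0 /polarQ add0r Qn Q0 (addrC (- b) a) (addrC b a) -eQ.
  rewrite /polarQ; lra.
Qed.

End Main.

Theorem lemma1 (R : realType) (V : vectType R) (Q : V -> R)
  (A : algType R[i]) (j : V -> A) (c : A -> A) (sigma : A -> A) :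
  ~~ odd (\dim (fullv : {vspace V})) ->
  is_quadratic_form Q -> nondegenerate_qf Q ->
  complexified_clifford Q j c ->
  real_structure j sigma ->
  [/\ (admissible c sigma <-> (forall x, Vsigma j sigma x -> Vsigma j sigma (c x))),
      ((forall x, Vsigma j sigma x -> Vsigma j sigma (c x)) <->
         (forall v : V, exists w : V, sigma (j v) = j w)),
      ((forall v : V, exists w : V, sigma (j v) = j w) <->
         (exists s : V -> V,
            (forall (a : R) (u v : V), s (a *: u + v) = a *: s u + s v) /\
            (forall v, Q (s v) = Q v) /\ (forall v, s (s v) = v) /\
            (forall v, sigma (j v) = j (s v)))) &
      ((exists s : V -> V,
            (forall (a : R) (u v : V), s (a *: u + v) = a *: s u + s v) /\
            (forall v, Q (s v) = Q v) /\ (forall v, s (s v) = v) /\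
            (forall v, sigma (j v) = j (s v))) <->
       ((forall v : V, exists a b : V, [/\ Vplus j sigma a, Vminus j sigma b & v = a + b]) /\
        (forall v : V, Vplus j sigma v -> Vminus j sigma v -> v = 0) /\
        (forall a b : V, Vplus j sigma a -> Vminus j sigma b -> polarQ Q a b = 0)))].
Proof.
move=> _ hq hn hc hr.
have h12 : P1 c sigma -> P2 j c sigma by apply: (@p1p2 R V Q A j c sigma).
have h23 : P2 j c sigma -> P3 j sigma by apply: (@p2p3 R V Q A j c sigma).
have h31 : P3 j sigma -> P1 c sigma by apply: (@p3p1 R V Q A j c sigma).
have h34 : P3 j sigma -> P4 Q j sigma by apply: (@p3p4 R V Q A j c sigma).
have h43 : P4 Q j sigma -> P3 j sigma by apply: (@p4p3 R V Q A j sigma).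
have h45 : P4 Q j sigma -> P5 Q j sigma by apply: (@p4p5 R V Q A j c sigma).
have h53 : P5 Q j sigma -> P3 j sigma by apply: (@p5p3 R V Q A j c sigma).
split; split => H.
- exact: h12.
- exact: h31 (h23 H).
- exact: h23 H.
- exact: h12 (h31 H).
- exact: h34 H.
- exact: h43 H.
- exact: h45 H.
- exact: h34 (h53 H).
Qed.
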